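(* Let $(k_n)$ be a sequence of positive integers with $2^{k_n}/n\to\infty$. Then, under the conditional distribution given $X_n^*=2^{k_n}$, \[ \frac{S_n}{X_n^*}-\frac{n k_n}{2^{k_n}}\xrightarrow{\ \mathbb{P}\ }1 , \] i.e. for every $\varepsilon>0$, $\mathbb{P}\big\{\big|\frac{S_n}{X_n^*}-\frac{nk_n}{2^{k_n}}-1\big|>\varepsilon\ \big|\ X_n^*=2^{k_n}\big\}\to0$.
   Context: $X_1,X_2,\ldots$ are iid with $\mathbb{P}\{X_i=2^k\}=2^{-k}$, $k\in\{1,2,\ldots\}$; $S_n=\sum_{i\le n}X_i$, $X_n^*=\max_{i\le n}X_i$. *)

(* Defs.v *)
From Stdlib Require Import Reals Lra List.
Import ListNotations.
Open Scope R_scope.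

(* X_i = 2^(e_i) with P{e_i = e} = 2^{-e}, e >= 1.  Conditionally on
   X_n^* = 2^k, every exponent lies in {1,...,k}, so all relevant events
   are determined by the finite set of exponent vectors in {1..k}^n. *)

Fixpoint tuples (n k : nat) : list (list nat) :=
  match n with
  | O => [nil]
  | S m => flat_map (fun e => map (cons e) (tuples m k)) (seq 1 k)
  end.

(* probability of the outcome (X_1..X_n) = (2^e_1..2^e_n) : prod 2^{-e_i} *)
Definition weight (l : list nat) : R :=
  fold_right (fun e acc => (/2) ^ e * acc) 1 l.

Definition Ssum (l : list nat) : R :=
  fold_right (fun e acc => 2 ^ e + acc) 0 l.

Definition maxexp (l : list nat) : nat := fold_right Nat.max 0%nat l.

Definition Rsum_list (l : list R) : R := fold_right Rplus 0 l.

(* P{ A and X_n^* = 2^k } for an event A depending on the exponent vector *)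
Definition prob_max (n k : nat) (A : list nat -> Prop)
  (Adec : forall l, {A l} + {~ A l}) : R :=
  Rsum_list (map (fun l => if Nat.eq_dec (maxexp l) k
                           then if Adec l then weight l else 0 else 0)
                 (tuples n k)).

Definition cond_prob (n k : nat) (A : list nat -> Prop)
  (Adec : forall l, {A l} + {~ A l}) : R :=
  prob_max n k A Adec / prob_max n k (fun _ => True) (fun _ => left I).

Definition dev_event (n k : nat) (eps : R) (l : list nat) : Prop :=
  Rabs (Ssum l / 2 ^ k - INR n * INR k / 2 ^ k - 1) > eps.

Definition dev_event_dec (n k : nat) (eps : R) :
  forall l, {dev_event n k eps l} + {~ dev_event n k eps l} :=
  fun l => Rgt_dec _ _.

(* Main.v *)
Require Import Defs.
From Stdlib Require Import Reals.
From Stdlib Require Import Lra Lia List Psatz.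
Import ListNotations.
Open Scope R_scope.

Fixpoint sumL {A : Type} (L : list A) (f : A -> R) : R :=
  match L with nil => 0 | x :: L' => f x + sumL L' f end.

Lemma Rsum_map {A : Type} (L : list A) f : Rsum_list (map f L) = sumL L f.
Proof. unfold Rsum_list; induction L as [|x L IH]; simpl; [reflexivity| rewrite IH; reflexivity]. Qed.

Lemma sumL_app {A : Type} (L1 L2 : list A) f : sumL (L1 ++ L2) f = sumL L1 f + sumL L2 f.
Proof. induction L1 as [|x L IH]; simpl; [ring| rewrite IH; ring]. Qed.

Lemma sumL_map {A B : Type} (h : A -> B) L f : sumL (map h L) f = sumL L (fun x => f (h x)).
Proof. induction L as [|x L IH]; simpl; [ring| rewrite IH; ring]. Qed.

Lemma sumL_flat_map {A B : Type} (g : A -> list B) L f :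
  sumL (flat_map g L) f = sumL L (fun x => sumL (g x) f).
Proof. induction L as [|x L IH]; simpl; [ring| rewrite sumL_app, IH; ring]. Qed.

Lemma sumL_ext_in {A : Type} (L : list A) f g :
  (forall x, In x L -> f x = g x) -> sumL L f = sumL L g.
Proof. induction L as [|x L IH]; intro H; simpl; [ring|].
  rewrite H by (left; auto). rewrite IH; [ring|]. intros; apply H; right; auto. Qed.

Lemma sumL_ext {A : Type} (L : list A) f g :
  (forall x, f x = g x) -> sumL L f = sumL L g.
Proof. intros H; apply sumL_ext_in; auto. Qed.

Lemma sumL_le {A : Type} (L : list A) f g :
  (forall x, In x L -> f x <= g x) -> sumL L f <= sumL L g.
Proof. induction L as [|x L IH]; intro H; simpl; [lra|].
  assert (f x <= g x) by (apply H; left; auto).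
  assert (sumL L f <= sumL L g) by (apply IH; intros; apply H; right; auto). lra. Qed.

Lemma sumL_scal {A : Type} (L : list A) c f : sumL L (fun x => c * f x) = c * sumL L f.
Proof. induction L as [|x L IH]; simpl; [ring| rewrite IH; ring]. Qed.

Lemma sumL_plus {A : Type} (L : list A) f g :
  sumL L (fun x => f x + g x) = sumL L f + sumL L g.
Proof. induction L as [|x L IH]; simpl; [ring| rewrite IH; ring]. Qed.

Lemma sumL_zero {A : Type} (L : list A) : sumL L (fun _ => 0) = 0.
Proof. induction L as [|x L IH]; simpl; [ring| rewrite IH; ring]. Qed.

Lemma sumL_pl2 {A : Type} (L : list A) f c g d :
  sumL L (fun x => f x * c + g x * d) = sumL L f * c + sumL L g * d.
Proof. induction L as [|x L IH]; simpl; [ring| rewrite IH; ring]. Qed.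

Lemma sumL_pl {A : Type} (L : list A) f c g :
  sumL L (fun x => f x * c + g x) = sumL L f * c + sumL L g.
Proof. induction L as [|x L IH]; simpl; [ring| rewrite IH; ring]. Qed.

Definition E (k n : nat) (f : list nat -> R) : R :=
  sumL (tuples n k) (fun l => weight l * f l).

Lemma weight_cons e l : weight (e :: l) = (/2)^e * weight l.
Proof. reflexivity. Qed.

Lemma weight_nonneg l : 0 <= weight l.
Proof. induction l as [|e l IH]; simpl; [lra|].
  apply Rmult_le_pos; [apply pow_le; lra | exact IH]. Qed.

Lemma E_S k n f : E k (S n) f =
  sumL (seq 1 k) (fun e => (/2)^e * E k n (fun l => f (e :: l))).
Proof. unfold E. cbn [tuples]. rewrite sumL_flat_map. apply sumL_ext; intro e.
  rewrite sumL_map. rewrite <- sumL_scal. apply sumL_ext; intro l.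
  rewrite weight_cons; ring. Qed.

Lemma E_0 k f : E k 0 f = f nil.
Proof. unfold E; simpl. ring. Qed.

Lemma E_ext k n f g : (forall l, f l = g l) -> E k n f = E k n g.
Proof. intros H; unfold E; apply sumL_ext; intro l; rewrite H; ring. Qed.

Lemma E_le_in k n f g : (forall l, In l (tuples n k) -> f l <= g l) -> E k n f <= E k n g.
Proof. intros H; unfold E; apply sumL_le; intros l Hl.
  apply Rmult_le_compat_l; [apply weight_nonneg| auto]. Qed.

Lemma E_plus k n f g : E k n (fun l => f l + g l) = E k n f + E k n g.
Proof. unfold E; rewrite <- sumL_plus; apply sumL_ext; intro; ring. Qed.

Lemma E_scal k n c f : E k n (fun l => c * f l) = c * E k n f.
Proof. unfold E; rewrite <- sumL_scal; apply sumL_ext; intro; ring. Qed.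

Definition ind (k e : nat) : R := if Nat.eq_dec e k then 1 else 0.
Definition yv (k e : nat) : R := if Nat.eq_dec e k then 0 else 2 ^ e.
Fixpoint cnt (k : nat) (l : list nat) : R :=
  match l with nil => 0 | e :: l' => ind k e + cnt k l' end.
Fixpoint Tt (k : nat) (l : list nat) : R :=
  match l with nil => 0 | e :: l' => yv k e + Tt k l' end.

Lemma Ssum_dec k l : Ssum l = cnt k l * 2 ^ k + Tt k l.
Proof. induction l as [|e l IH]; simpl; [ring|].
  change (fold_right (fun e acc => 2 ^ e + acc) 0 l) with (Ssum l). rewrite IH.
  unfold ind, yv; destruct (Nat.eq_dec e k); [subst; ring| ring]. Qed.

Lemma cnt_nat k l : exists m, cnt k l = INR m.
Proof. induction l as [|e l [m Hm]]; simpl; [exists 0%nat; reflexivity|].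
  unfold ind; destruct (Nat.eq_dec e k).
  - exists (S m); rewrite S_INR, Hm; ring.
  - exists m; rewrite Hm; ring. Qed.

Lemma cnt_nonneg k l : 0 <= cnt k l.
Proof. destruct (cnt_nat k l) as [m ->]; apply pos_INR. Qed.

Lemma cc_nonneg k l : 0 <= cnt k l * (cnt k l - 1).
Proof. destruct (cnt_nat k l) as [m ->]. destruct m as [|m].
  - simpl; lra.
  - rewrite S_INR. pose proof (pos_INR m). nra. Qed.

Lemma in_cnt k l : In k l -> 1 <= cnt k l.
Proof. induction l as [|e l IH]; simpl; [tauto|]. intros [H|H].
  - subst. unfold ind; destruct (Nat.eq_dec k k); [|congruence].
    pose proof (cnt_nonneg k l); lra.
  - pose proof (IH H). unfold ind; destruct (Nat.eq_dec e k); lra. Qed.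

Lemma notin_cnt k l : ~ In k l -> cnt k l = 0.
Proof. induction l as [|e l IH]; simpl; [auto|]. intros H.
  rewrite IH by tauto. unfold ind; destruct (Nat.eq_dec e k); [subst; tauto| ring]. Qed.

Lemma maxexp_in k l : (1 <= k)%nat -> maxexp l = k -> In k l.
Proof. induction l as [|e l IH]; simpl; intros Hk H; [lia|].
  change (fold_right Nat.max 0%nat l) with (maxexp l) in H.
  destruct (Nat.max_dec e (maxexp l)) as [E1|E1]; rewrite E1 in H; auto. Qed.

Lemma maxexp_ge x l : In x l -> (x <= maxexp l)%nat.
Proof. induction l as [|e l IH]; simpl; [tauto|].
  change (fold_right Nat.max 0%nat l) with (maxexp l).
  intros [H|H]; [subst; lia| specialize (IH H); lia]. Qed.

Lemma maxexp_le k l : (forall e, In e l -> (e <= k)%nat) -> (maxexp l <= k)%nat.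
Proof. induction l as [|e l IH]; simpl; intros H; [lia|].
  change (fold_right Nat.max 0%nat l) with (maxexp l).
  assert (e <= k)%nat by (apply H; auto).
  assert (maxexp l <= k)%nat by (apply IH; auto). lia. Qed.

Lemma tuples_range n k l : In l (tuples n k) -> forall e, In e l -> (e <= k)%nat.
Proof. revert l; induction n as [|n IH]; intros l Hl e He; simpl in Hl.
  - destruct Hl as [<-|[]]; destruct He.
  - apply in_flat_map in Hl. destruct Hl as [e0 [He0 Hl]].
    apply in_map_iff in Hl. destruct Hl as [l' [<- Hl']].
    destruct He as [<-|He]; [apply in_seq in He0; lia| eapply IH; eauto]. Qed.

Definition pp (e : nat) : R := (/2) ^ e.
Definition qq k := sumL (seq 1 k) pp.
Definition rr k := sumL (seq 1 k) (fun e => pp e * ind k e).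
Definition mu k := sumL (seq 1 k) (fun e => pp e * yv k e).
Definition nu k := sumL (seq 1 k) (fun e => pp e * (yv k e) ^ 2).

Lemma pp_pos e : 0 <= pp e.
Proof. unfold pp; apply pow_le; lra. Qed.

Lemma seq_last j f : sumL (seq 1 (S j)) f = sumL (seq 1 j) f + f (S j).
Proof. rewrite seq_S, sumL_app. simpl. ring. Qed.

Lemma sum_pp j : sumL (seq 1 j) pp = 1 - (/2) ^ j.
Proof. induction j as [|j IH]; [simpl; ring|]. rewrite seq_last, IH. unfold pp.
  simpl. field. Qed.

Lemma sum_2pow j : sumL (seq 1 j) (fun e => 2 ^ e) = 2 ^ (S j) - 2.
Proof. induction j as [|j IH]; [simpl; ring|]. rewrite seq_last, IH. simpl. ring. Qed.

Lemma sum_one j : sumL (seq 1 j) (fun e => 1) = INR j.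
Proof. induction j as [|j IH]; [simpl; ring|]. rewrite seq_last, IH, S_INR. ring. Qed.

Lemma pp2 e : pp e * 2 ^ e = 1.
Proof. unfold pp. rewrite <- Rpow_mult_distr. replace (/2 * 2) with 1 by field.
  apply pow1. Qed.


Lemma consts j : let k := S j in
  qq k = 1 - (/2) ^ k /\ rr k = (/2) ^ k /\ mu k = INR k - 1 /\ nu k = 2 ^ k - 2.
Proof. intros k. unfold qq, rr, mu, nu, k. rewrite !seq_last.
  assert (Hin : forall e, In e (seq 1 j) -> e <> S j) by (intros e He; apply in_seq in He; lia).
  repeat split.
  - rewrite sum_pp. unfold pp; simpl; field.
  - rewrite (sumL_ext_in _ _ (fun _ => 0)).
    + unfold ind; destruct (Nat.eq_dec (S j) (S j)); [|congruence].
      assert (sumL (seq 1 j) (fun _ : nat => 0) = 0) as ->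
        by (clear; induction (seq 1 j); simpl; lra). unfold pp; ring.
    + intros e He; unfold ind; destruct (Nat.eq_dec e (S j)); [exfalso; eapply Hin; eauto| ring].
  - rewrite (sumL_ext_in _ _ (fun _ => 1)).
    + rewrite sum_one. unfold yv; destruct (Nat.eq_dec (S j) (S j)); [|congruence].
      rewrite S_INR; ring.
    + intros e He; unfold yv; destruct (Nat.eq_dec e (S j)); [exfalso; eapply Hin; eauto| apply pp2].
  - rewrite (sumL_ext_in _ _ (fun e => 2 ^ e)).
    + rewrite sum_2pow. unfold yv; destruct (Nat.eq_dec (S j) (S j)); [|congruence]. ring.
    + intros e He; unfold yv; destruct (Nat.eq_dec e (S j)); [exfalso; eapply Hin; eauto|].
      replace ((2 ^ e) ^ 2) with (2 ^ e * 2 ^ e) by ring. rewrite <- Rmult_assoc, pp2. ring.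
Qed.

Lemma Z_closed k n : E k n (fun _ => 1) = qq k ^ n.
Proof. induction n as [|n IH]; [rewrite E_0; simpl; ring|].
  rewrite E_S. rewrite (sumL_ext _ _ (fun e => pp e * qq k ^ n + 0)).
  - rewrite sumL_pl, sumL_zero. fold (qq k). simpl. ring.
  - intro e. rewrite IH. unfold pp; ring. Qed.

Lemma E_const k n c : E k n (fun _ => c) = c * qq k ^ n.
Proof. rewrite <- Z_closed, <- E_scal. apply E_ext; intro; ring. Qed.

Definition V k n a := E k n (fun l => (Tt k l - a) ^ 2).

Lemma V_S k n a : V k (S n) a = sumL (seq 1 k) (fun e => pp e * V k n (a - yv k e)).
Proof. unfold V. rewrite E_S. apply sumL_ext; intro e. unfold pp. f_equal.
  apply E_ext; intro l. simpl. ring. Qed.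

Lemma V_bound k n a : qq k <= 1 -> 0 <= nu k ->
  V k n a <= INR n * nu k + (INR n * mu k - a) ^ 2.
Proof. intros Hq Hnu. revert a; induction n as [|n IH]; intro a.
  - unfold V; rewrite E_0. simpl. lra.
  - rewrite V_S.
    eapply Rle_trans.
    { apply sumL_le. intros e _. apply Rmult_le_compat_l; [apply pp_pos| apply (IH (a - yv k e))]. }
    set (b := INR n * mu k - a).
    rewrite (sumL_ext _ _ (fun e => pp e * (INR n * nu k + b ^ 2) +
        ((2 * b) * (pp e * yv k e) + pp e * yv k e ^ 2))).
    2: { intro e. unfold b. ring. }
    rewrite sumL_pl, sumL_plus, sumL_scal. fold (qq k) (mu k) (nu k).
    rewrite S_INR.
    assert (0 <= INR n * nu k + b ^ 2) by (pose proof (pos_INR n); nra).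
    assert (0 <= (1 - qq k) * (INR n * nu k + b ^ 2)) by nra.
    replace ((INR n + 1) * mu k - a) with (b + mu k) by (unfold b; ring).
    nra.
Qed.

Definition C k n := E k n (cnt k).

Lemma C_S k n : C k (S n) = rr k * qq k ^ n + qq k * C k n.
Proof. unfold C at 1. rewrite E_S.
  rewrite (sumL_ext _ _ (fun e => (pp e * ind k e) * qq k ^ n + pp e * C k n)).
  - rewrite sumL_pl2. fold (rr k) (qq k). ring.
  - intro e. simpl. rewrite (E_plus k n (fun _ => ind k e) (cnt k)), E_const.
    unfold pp, C; ring. Qed.

Lemma C_closed k n : C k (S n) = INR (S n) * rr k * qq k ^ n.
Proof. induction n as [|n IH].
  - rewrite C_S. unfold C; rewrite E_0. simpl. ring.
  - rewrite C_S, IH. rewrite (S_INR (S n)). simpl. ring. Qed.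

Lemma pow_le1 x n : 0 <= x <= 1 -> x ^ n <= 1.
Proof. intros H; induction n; simpl; [lra|]. pose proof (pow_le x n). nra. Qed.

Lemma C_le k n : 0 <= qq k <= 1 -> 0 <= rr k -> C k n <= INR n * rr k.
Proof. intros Hq Hr. destruct n as [|n].
  - unfold C; rewrite E_0; simpl; lra.
  - rewrite C_closed. pose proof (pow_le1 _ n Hq). pose proof (pos_INR (S n)).
    assert (0 <= INR (S n) * rr k) by nra. nra. Qed.

Definition B k n := E k n (fun l => cnt k l * (cnt k l - 1)).

Lemma E_nonneg k n f : (forall l, 0 <= f l) -> 0 <= E k n f.
Proof. intros H. unfold E. clear -H. induction (tuples n k); simpl; [lra|].
  pose proof (weight_nonneg a); pose proof (H a); nra. Qed.

Lemma B_S k n : B k (S n) = 2 * rr k * C k n + qq k * B k n.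
Proof. unfold B at 1. rewrite E_S.
  rewrite (sumL_ext _ _ (fun e => (pp e * ind k e) * (2 * C k n) + pp e * B k n)).
  - rewrite sumL_pl2. fold (rr k) (qq k). ring.
  - intro e. simpl.
    rewrite (E_ext _ _ _ (fun l => (2 * ind k e) * cnt k l + cnt k l * (cnt k l - 1))).
    + rewrite E_plus, E_scal. unfold pp, C, B; ring.
    + intro l. unfold ind; destruct (Nat.eq_dec e k); ring. Qed.

Lemma B_le k n : 0 <= qq k <= 1 -> 0 <= rr k -> B k n <= INR n * INR n * rr k ^ 2.
Proof. intros Hq Hr. induction n as [|n IH].
  - unfold B; rewrite E_0; simpl; lra.
  - rewrite B_S. pose proof (C_le k n Hq Hr).
    assert (0 <= B k n) by (apply E_nonneg; intro; apply cc_nonneg).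
    assert (qq k * B k n <= B k n) by nra.
    rewrite S_INR. pose proof (pos_INR n). nra. Qed.

Definition A k n a := E k n (fun l => cnt k l * (Tt k l - a) ^ 2).

Lemma A_S k m a : A k (S m) a = rr k * V k m a + sumL (seq 1 k) (fun e => pp e * A k m (a - yv k e)).
Proof. unfold A at 1. rewrite E_S.
  rewrite (sumL_ext _ _ (fun e => (pp e * ind k e) * V k m a + pp e * A k m (a - yv k e))).
  - rewrite sumL_pl. fold (rr k). ring.
  - intro e. simpl.
    rewrite (E_ext _ _ _ (fun l => ind k e * (Tt k l - a) ^ 2 + cnt k l * (Tt k l - (a - yv k e)) ^ 2)).
    + rewrite E_plus, E_scal. unfold pp, V, A; ring.
    + intro l. unfold ind, yv; destruct (Nat.eq_dec e k); ring. Qed.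

Lemma A_closed k n a : A k (S n) a = INR (S n) * rr k * V k n a.
Proof. revert a; induction n as [|n IH]; intro a.
  - rewrite A_S. rewrite (sumL_ext _ _ (fun _ => 0)).
    + assert (sumL (seq 1 k) (fun _ : nat => 0) = 0) as -> by (induction (seq 1 k); simpl; lra).
      simpl; ring.
    + intro e. unfold A; rewrite E_0. simpl. ring.
  - rewrite A_S. rewrite (sumL_ext _ _ (fun e => (INR (S n) * rr k) * (pp e * V k n (a - yv k e)))).
    + rewrite sumL_scal, <- V_S. rewrite (S_INR (S n)). ring.
    + intro e. rewrite IH. ring. Qed.

Lemma num_bound n k eps : (1 <= k)%nat -> eps > 0 ->
  prob_max n k (dev_event n k eps) (dev_event_dec n k eps) <=
  / (eps ^ 2 * (2 ^ k) ^ 2) * A k n (INR n * INR k) + B k n.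
Proof. intros Hk He. set (K := / (eps ^ 2 * (2 ^ k) ^ 2)).
  set (a := INR n * INR k).
  assert (Hw : 0 < 2 ^ k) by (apply pow_lt; lra).
  assert (HK : 0 < K) by (unfold K; apply Rinv_0_lt_compat; apply Rmult_lt_0_compat; apply pow_lt; lra).
  unfold A, B. rewrite <- E_scal, <- E_plus. unfold prob_max, E. rewrite Rsum_map.
  apply sumL_le; intros l _.
  pose proof (weight_nonneg l).
  assert (Hg : 0 <= K * (cnt k l * (Tt k l - a) ^ 2) + cnt k l * (cnt k l - 1)).
  { pose proof (cnt_nonneg k l). pose proof (cc_nonneg k l).
    assert (0 <= (Tt k l - a) ^ 2) by apply pow2_ge_0. assert (0 <= cnt k l * (Tt k l - a) ^ 2) by nra. nra. }
  destruct (Nat.eq_dec (maxexp l) k) as [Hm|Hm]; [destruct (dev_event_dec n k eps l) as [Hd|Hd]|];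
    [| nra | nra].
  assert (Hc := in_cnt k l (maxexp_in k l Hk Hm)).
  assert (1 <= K * (cnt k l * (Tt k l - a) ^ 2) + cnt k l * (cnt k l - 1)); [|nra].
  destruct (cnt_nat k l) as [m Hcm]. rewrite Hcm in *.
  destruct m as [|[|m]].
  - simpl in Hc; lra.
  - change (INR 1) with 1 in *. unfold dev_event in Hd. rewrite (Ssum_dec k), Hcm in Hd.
    change (INR 1) with 1 in Hd.
    set (z := (Tt k l - a) / 2 ^ k).
    replace ((1 * 2 ^ k + Tt k l) / 2 ^ k - INR n * INR k / 2 ^ k - 1) with z in Hd
      by (unfold z, a; field; lra).
    assert (Hz : z ^ 2 > eps ^ 2).
    { clearbody z. clear -Hd He. rewrite <- pow2_abs. pose proof (Rabs_pos z). nra. }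
    replace (K * (1 * (Tt k l - a) ^ 2)) with (z ^ 2 / eps ^ 2) by (unfold K, z; field; lra).
    assert (0 < (z ^ 2 - eps ^ 2) / eps ^ 2) by (clearbody z; clear -Hz He; apply Rdiv_lt_0_compat; nra).
    replace (z ^ 2 / eps ^ 2) with ((z ^ 2 - eps ^ 2) / eps ^ 2 + 1) by (field; lra). lra.
  - clearbody K a. assert (0 <= K * (INR (S (S m)) * (Tt k l - a) ^ 2)).
    { apply Rmult_le_pos; [lra| apply Rmult_le_pos; [apply pos_INR| apply pow2_ge_0]]. }
    rewrite !S_INR in *. pose proof (pos_INR m). nra.
Qed.

Lemma den_bound n k : prob_max n k (fun _ => True) (fun _ => left I) >= C k n - B k n / 2.
Proof. unfold C, B. replace (E k n (cnt k) - E k n (fun l => cnt k l * (cnt k l - 1)) / 2)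
    with (E k n (fun l => cnt k l + (-/2) * (cnt k l * (cnt k l - 1))))
    by (rewrite E_plus, E_scal; field).
  apply Rle_ge. unfold prob_max, E. rewrite Rsum_map.
  apply sumL_le; intros l Hl. pose proof (weight_nonneg l).
  destruct (Nat.eq_dec (maxexp l) k) as [Hm|Hm].
  - assert (cnt k l + - / 2 * (cnt k l * (cnt k l - 1)) <= 1); [|nra].
    destruct (cnt_nat k l) as [m ->]. destruct m as [|[|m]]; [simpl; lra| simpl; lra|].
    rewrite !S_INR. pose proof (pos_INR m). nra.
  - assert (~ In k l).
    { intro Hin. apply Hm. apply Nat.le_antisymm.
      - apply maxexp_le. eapply tuples_range; eauto.
      - apply maxexp_ge; auto. }
    rewrite notin_cnt by auto. lra.
Qed.

Lemma bernoulli r m : 0 <= r <= 1 -> (1 - r) ^ m >= 1 - INR m * r.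
Proof. intros H; induction m as [|m IH]; [simpl; lra|].
  rewrite S_INR. cbn [pow]. pose proof (pos_INR m). nra. Qed.

Lemma ksq k : INR k ^ 2 <= 2 * 2 ^ k.
Proof. induction k as [|k IH]; [simpl; lra|].
  destruct k as [|[|[|k]]]; [simpl; lra| simpl; lra| simpl; lra|].
  rewrite (S_INR (S (S (S k)))).
  change (2 ^ S (S (S (S k)))) with (2 * 2 ^ S (S (S k))).
  assert (3 <= INR (S (S (S k)))) by (replace 3 with (INR 3) by (simpl; lra); apply le_INR; lia).
  nra. Qed.

Lemma final_alg (N D nn kk w r x eps : R) :
  eps > 0 -> 1 <= nn -> 1 <= kk -> 0 < w -> r * w = 1 -> kk ^ 2 <= 2 * w ->
  x = nn * r -> x <= 1 / 3 -> 0 <= N ->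
  N <= r ^ 2 / eps ^ 2 * (nn * r * ((nn - 1) * (w - 2) + (nn + kk - 1) ^ 2)) + nn * nn * r ^ 2 ->
  D >= nn * r * (1 - (nn - 1) * r) - nn * nn * r ^ 2 / 2 ->
  0 <= N / D /\ N / D <= 2 * (7 / eps ^ 2 + 1) * x.
Proof. intros He Hn Hk Hw Hrw Hkk Hx Hx3 HN0 HN HD.
  assert (Hr : 0 < r) by nra.
  assert (Hx0 : 0 < x) by nra.
  set (Q := (nn - 1) * (w - 2) + (nn + kk - 1) ^ 2).
  assert (H1 : r ^ 2 * ((nn - 1) * (w - 2)) <= x).
  { assert ((nn - 1) * (w - 2) <= nn * w) by nra.
    assert (r ^ 2 * ((nn - 1) * (w - 2)) <= r ^ 2 * (nn * w)) by (apply Rmult_le_compat_l; nra).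
    replace (r ^ 2 * (nn * w)) with (nn * r * (r * w)) in H0 by ring. rewrite Hrw in H0. nra. }
  assert (H2 : (nn + kk - 1) ^ 2 <= 2 * nn ^ 2 + 2 * kk ^ 2) by (pose proof (pow2_ge_0 (nn - kk)); nra).
  assert (H3 : r ^ 2 * kk ^ 2 <= 2 * r).
  { assert (r ^ 2 * kk ^ 2 <= r ^ 2 * (2 * w)) by (apply Rmult_le_compat_l; nra).
    replace (r ^ 2 * (2 * w)) with (2 * r * (r * w)) in H by ring. rewrite Hrw in H. lra. }
  assert (H4 : r <= x) by nra.
  assert (HQ : r ^ 2 * Q <= 7 * x).
  { unfold Q. assert (r ^ 2 * (nn + kk - 1) ^ 2 <= r ^ 2 * (2 * nn ^ 2 + 2 * kk ^ 2))
      by (apply Rmult_le_compat_l; nra).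
    assert (r ^ 2 * (2 * nn ^ 2 + 2 * kk ^ 2) = 2 * x ^ 2 + 2 * (r ^ 2 * kk ^ 2)) by (rewrite Hx; ring).
    nra. }
  assert (HN' : N <= x ^ 2 * (7 / eps ^ 2 + 1)).
  { assert (r ^ 2 / eps ^ 2 * (nn * r * Q) = x * (r ^ 2 * Q) / eps ^ 2) by (rewrite Hx; field; lra).
    assert (x * (r ^ 2 * Q) / eps ^ 2 <= x * (7 * x) / eps ^ 2).
    { unfold Rdiv. apply Rmult_le_compat_r. apply Rlt_le, Rinv_0_lt_compat; nra.
      apply Rmult_le_compat_l; lra. }
    assert (nn * nn * r ^ 2 = x ^ 2) by (rewrite Hx; ring).
    fold Q in HN.
    assert (x * (7 * x) / eps ^ 2 = x ^ 2 * (7 / eps ^ 2)) by (field; lra). nra. }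
  assert (HD' : D >= x / 2).
  { assert (nn * r * (1 - (nn - 1) * r) >= x * (1 - x)).
    { rewrite Hx. assert ((nn - 1) * r <= nn * r) by nra. nra. }
    assert (nn * nn * r ^ 2 = x ^ 2) by (rewrite Hx; ring). nra. }
  assert (HDp : 0 < D) by lra.
  split.
  - apply Rmult_le_pos; [lra| apply Rlt_le, Rinv_0_lt_compat; lra].
  - apply (Rmult_le_reg_r D); [lra|]. unfold Rdiv. rewrite Rmult_assoc, Rinv_l by lra.
    assert (0 <= 7 / eps ^ 2 + 1).
    { assert (0 < 7 / eps ^ 2) by (apply Rdiv_lt_0_compat; nra). lra. }
    assert (2 * (7 * / eps ^ 2 + 1) * x * D >= 2 * (7 * / eps ^ 2 + 1) * x * (x / 2)).
    { apply Rle_ge, Rmult_le_compat_l; [| lra]. unfold Rdiv in *. nra. }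
    unfold Rdiv in *. nra.
Qed.

Lemma sumL_nonneg {A : Type} (L : list A) f : (forall x, 0 <= f x) -> 0 <= sumL L f.
Proof. intros H; induction L as [|x L IH]; simpl; [lra| pose proof (H x); lra]. Qed.

Lemma per_n k n eps : (1 <= k)%nat -> (1 <= n)%nat -> eps > 0 ->
  INR n * / 2 ^ k <= 1 / 3 ->
  0 <= cond_prob n k (dev_event n k eps) (dev_event_dec n k eps) /\
  cond_prob n k (dev_event n k eps) (dev_event_dec n k eps)
    <= 2 * (7 / eps ^ 2 + 1) * (INR n * / 2 ^ k).
Proof. intros Hk Hn He Hx.
  destruct k as [|j]; [lia|]. destruct n as [|m]; [lia|].
  pose proof (consts j) as Hc. cbv zeta in Hc. destruct Hc as [Hq [Hr [Hmu Hnu]]].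
  set (w := 2 ^ S j) in *.
  assert (Hw : 0 < w) by (apply pow_lt; lra).
  assert (Hw2 : 2 <= w).
  { unfold w. change (2 ^ S j) with (2 * 2 ^ j). pose proof (pow_R1_Rle 2 j). lra. }
  rewrite pow_inv in Hq, Hr. fold w in Hq, Hr.
  assert (Hr0 : 0 < / w) by (apply Rinv_0_lt_compat; lra).
  assert (Hr1 : / w <= 1) by (rewrite <- Rinv_1; apply Rinv_le_contravar; lra).
  assert (Hq1 : 0 <= qq (S j) <= 1) by lra.
  assert (Hnn : 1 <= INR (S m)) by (rewrite S_INR; pose proof (pos_INR m); lra).
  assert (Hkk : 1 <= INR (S j)) by (rewrite S_INR; pose proof (pos_INR j); lra).
  unfold cond_prob.
  apply (final_alg _ _ (INR (S m)) (INR (S j)) w (/ w) (INR (S m) * / w) eps); auto.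
  - apply Rinv_l; lra.
  - apply ksq.
  - unfold prob_max. rewrite Rsum_map. apply sumL_nonneg. intro l.
    pose proof (weight_nonneg l).
    destruct (Nat.eq_dec (maxexp l) (S j)); [destruct (dev_event_dec (S m) (S j) eps l)|]; lra.
  - eapply Rle_trans; [apply num_bound; [lia| exact He]|].
    rewrite A_closed. fold w.
    assert (HV := V_bound (S j) m (INR (S m) * INR (S j)) ltac:(lra) ltac:(lra)).
    rewrite Hmu, Hnu in HV.
    replace (INR m) with (INR (S m) - 1) in HV by (rewrite S_INR; ring).
    replace ((INR (S m) - 1) * (INR (S j) - 1) - INR (S m) * INR (S j)) with
      (- (INR (S m) + INR (S j) - 1)) in HV by ring.
    replace ((- (INR (S m) + INR (S j) - 1)) ^ 2) with ((INR (S m) + INR (S j) - 1) ^ 2) in HV by ring.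
    assert (HB := B_le (S j) (S m) Hq1 ltac:(lra)). rewrite Hr in HB.
    rewrite Hr.
    assert (HK : / (eps ^ 2 * w ^ 2) = / w ^ 2 / eps ^ 2) by (field; split; lra).
    rewrite HK.
    assert (0 <= / w ^ 2 / eps ^ 2).
    { apply Rmult_le_pos; apply Rlt_le, Rinv_0_lt_compat; apply pow_lt; lra. }
    assert (0 <= INR (S m) * / w) by nra.
    assert (/ w ^ 2 / eps ^ 2 * (INR (S m) * / w * V (S j) m (INR (S m) * INR (S j))) <=
            / w ^ 2 / eps ^ 2 * (INR (S m) * / w * ((INR (S m) - 1) * (w - 2) +
              (INR (S m) + INR (S j) - 1) ^ 2))).
    { apply Rmult_le_compat_l; auto. apply Rmult_le_compat_l; auto. }
    replace ((/ w) ^ 2) with (/ w ^ 2) in * by (field; lra). lra.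
  - eapply Rge_trans; [apply den_bound|].
    rewrite C_closed, Hr, Hq.
    assert (HB := B_le (S j) (S m) Hq1 ltac:(lra)). rewrite Hr in HB.
    pose proof (bernoulli (/ w) m ltac:(lra)).
    replace (INR m) with (INR (S m) - 1) in H by (rewrite S_INR; ring).
    assert (0 <= INR (S m) * / w) by nra.
    assert (INR (S m) * / w * (1 - / w) ^ m >= INR (S m) * / w * (1 - (INR (S m) - 1) * / w)).
    { apply Rle_ge, Rmult_le_compat_l; lra. }
    lra.
Qed.

Theorem proposition3 (k : nat -> nat) (hk : forall n, (1 <= k n)%nat)
  (hgrow : forall M : R, exists N : nat, forall n : nat, (n >= N)%nat ->
             2 ^ (k n) / INR n > M) :
  forall eps : R, eps > 0 ->
    Un_cv (fun n => cond_prob n (k n) (dev_event n (k n) eps)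
                      (dev_event_dec n (k n) eps)) 0.
Proof.
  intros eps He d Hd.
  set (c := 2 * (7 / eps ^ 2 + 1)).
  assert (Hc : 0 < c).
  { unfold c. assert (0 < 7 / eps ^ 2) by (apply Rdiv_lt_0_compat; nra). lra. }
  set (eta := Rmin (1 / 3) (d / (2 * c))).
  assert (Heta : 0 < eta).
  { unfold eta. apply Rmin_pos; [lra| apply Rdiv_lt_0_compat; lra]. }
  destruct (hgrow (/ eta)) as [N0 HN0].
  exists (Nat.max N0 1). intros n Hn.
  assert (Hn1 : (1 <= n)%nat) by lia.
  specialize (HN0 n ltac:(lia)).
  set (w := 2 ^ k n) in *.
  assert (Hw : 0 < w) by (apply pow_lt; lra).
  assert (Hnn : 0 < INR n) by (apply lt_0_INR; lia).
  assert (Hx : INR n * / w < eta).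
  { assert (H1 : eta * (w / INR n) > 1).
    { replace 1 with (eta * / eta) by (field; lra). apply Rmult_lt_compat_l; lra. }
    assert (H2 : eta * w > INR n).
    { replace (eta * w) with (eta * (w / INR n) * INR n) by (field; lra). nra. }
    apply (Rmult_lt_reg_r w); [lra|]. rewrite Rmult_assoc, Rinv_l by lra. lra. }
  assert (He1 : eta <= 1 / 3) by apply Rmin_l.
  assert (He2 : eta <= d / (2 * c)) by apply Rmin_r.
  destruct (per_n (k n) n eps (hk n) Hn1 He ltac:(fold w; lra)) as [H0 H1].
  fold w in H1. fold c in H1.
  unfold R_dist. rewrite Rminus_0_r, Rabs_pos_eq by exact H0.
  assert (Ha : c * (INR n * / w) < c * eta) by (apply Rmult_lt_compat_l; lra).
  assert (Hb : c * eta <= c * (d / (2 * c))) by (apply Rmult_le_compat_l; lra).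
  replace (c * (d / (2 * c))) with (d / 2) in Hb by (field; lra).
  lra.
Qed.
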